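(* $R_3(L) \le 2593$. That is, for every coloring of the lattice grid $[2593]\times[2593]$ with 3 colors there exist integers $i,j$ and $t\ge 1$ such that the three points $(i,j)$, $(i,j+t)$, $(i+t,j+t)$ all lie in the grid and all receive the same color.
   Context: For $n\in\mathbb{N}$, $[n]=\{1,\dots,n\}$. An $L$ in the grid $[n]\times[n]$ is a set of three lattice points of the form $\{(i,j),(i,j+t),(i+t,j+t)\}$ with $t$ a positive integer (an isosceles right triangle). A $c$-coloring of the grid is a function $[n]\times[n]\to[c]$. $R_c(L)$ denotes the least $n$ such that every $c$-coloring of $[n]\times[n]$ contains a monochromatic $L$. *)

(* Defs.v *)
From mathcomp Require Import all_boot.

(* The grid [n] x [n] = {1..n} x {1..n}.  A c-coloring is modeled as a
   function nat -> nat -> 'I_c; only its values on the grid matter. *)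
Definition in_grid (n i j : nat) : Prop := 1 <= i <= n /\ 1 <= j <= n.

Definition has_mono_L (n c : nat) (col : nat -> nat -> 'I_c) : Prop :=
  exists i j t : nat,
    1 <= t /\
    in_grid n i j /\ in_grid n i (j + t) /\ in_grid n (i + t) (j + t) /\
    col i j = col i (j + t) /\ col i (j + t) = col (i + t) (j + t).

(* Main.v *)
Require Import Defs.
From mathcomp Require Import all_boot zify.
From Stdlib Require Import Classical.

Lemma three_col (x y z w : 'I_3) : x != y -> x != z -> y != z -> w != x -> w != y -> w = z.
Proof.
by move: x y z w; do 4! case=> [[|[|[|//]]] ?]; move=> *; apply/val_inj.
Qed.

Definition pqsel (x0 x1 x2 x3 : 'I_3) : nat * nat :=
  if x0 == x1 then (0,1) else if x0 == x2 then (0,2) else if x1 == x2 then (1,2)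
  else if x0 == x3 then (0,3) else if x1 == x3 then (1,3) else (2,3).

Lemma pqsel_ok (g : nat -> 'I_3) :
  (pqsel (g 0) (g 1) (g 2) (g 3)).1 < (pqsel (g 0) (g 1) (g 2) (g 3)).2 <= 3 /\
  g (pqsel (g 0) (g 1) (g 2) (g 3)).1 = g (pqsel (g 0) (g 1) (g 2) (g 3)).2.
Proof.
rewrite /pqsel.
case: eqP => [->|H01] //; case: eqP => [->|H02] //; case: eqP => [->|H12] //.
case: eqP => [->|H03] //; case: eqP => [->|H13] //; split => //=.
apply: (three_col (g 0) (g 1)); apply/eqP => E;
  first [exact: H01 E|exact: H02 E|exact: H12 E|exact: H03 (esym E)|exact: H13 (esym E)|exact: H01 (esym E)|exact: H02 (esym E)|exact: H12 (esym E)|exact: H03 E|exact: H13 E].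
Qed.

Definition PQ : seq (nat * nat) := [:: (0,1); (0,2); (1,2); (0,3); (1,3); (2,3)].

Lemma pqsel_in x0 x1 x2 x3 : pqsel x0 x1 x2 x3 \in PQ.
Proof. by rewrite /pqsel; repeat case: ifP => _. Qed.

Definition o0 : 'I_3 := @Ordinal 3 0 isT.
Definition o1 : 'I_3 := @Ordinal 3 1 isT.
Definition o2 : 'I_3 := @Ordinal 3 2 isT.
Definition CC : seq ('I_3 * 'I_3) :=
  [:: (o0, o1); (o0, o2); (o1, o0); (o1, o2); (o2, o0); (o2, o1)].

Lemma CC_in (x y : 'I_3) : x != y -> (x, y) \in CC.
Proof. by move: x y; do 2! case=> [[|[|[|//]]] ?]. Qed.

Definition SS := [seq (pq, cc) | pq <- PQ, cc <- CC].

Lemma size_SS : size SS <= 36.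
Proof. by []. Qed.

Definition typ (col : nat -> nat -> 'I_3) (b : nat) : (nat * nat) * ('I_3 * 'I_3) :=
  let pq := pqsel (col 1 (b + 1 + 0)) (col 1 (b + 1 + 1)) (col 1 (b + 1 + 2)) (col 1 (b + 1 + 3)) in
  (pq, (col 1 (b + 1 + pq.2), col (1 + pq.2 - pq.1) (b + 1 + pq.2))).

Lemma window (col : nat -> nat -> 'I_3) w :
  (forall i j t i' j', 0 < t -> 0 < i -> 0 < j -> i' = i + t -> j' = j + t ->
     i' <= 2593 -> j' <= 2593 -> col i j = col i j' -> col i j' = col i' j' -> False) ->
  w <= 2589 -> forall p q c1 c2, typ col w = ((p, q), (c1, c2)) ->
  [/\ p < q <= 3, col 1 (w + 1 + p) = c1, col 1 (w + 1 + q) = c1,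
      col (1 + q - p) (w + 1 + q) = c2 & c1 != c2].
Proof.
move=> NL Hw p q c1 c2; rewrite /typ.
move: (pqsel_ok (fun k => col 1 (w + 1 + k))) => /=.
case: (pqsel _ _ _ _) => p' q' /= [Hpq Hg] [E1 E2 E3 E4]; subst p' q' c1 c2.
split => //; apply/eqP => E.
apply: (NL 1 (w + 1 + p) (q - p) (1 + q - p) (w + 1 + q) _ _ _ _ _ _ _ Hg E); lia.
Qed.
Lemma sorted_sum (s : seq nat) (k : nat) :
  sorted ltn s -> all (fun x => k < x) s ->
  size s * (2*k + 1 + size s) <= 2 * sumn s.
Proof.
elim: s k => [|x s IH] k //= Hp /andP[Hx Hall].
have Hs : sorted ltn s := path_sorted Hp.
have Hm : all (fun y => x < y) s := order_path_min ltn_trans Hp.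
have := IH x Hs Hm. nia.
Qed.

Lemma uniq_sum (s : seq nat) : uniq s -> 0 \notin s ->
  size s * (size s).+1 <= 2 * sumn s.
Proof.
move=> Hu H0.
have Hp := perm_sort leq s.
have Hpe : perm_eq (sort leq s) s by rewrite Hp perm_refl.
rewrite -(perm_size Hpe) -(perm_sumn Hpe).
have Hso : sorted ltn (sort leq s).
  by rewrite ltn_sorted_uniq_leq (perm_uniq Hpe) Hu sort_sorted //; exact: leq_total.
have Hall : all (fun x => 0 < x) (sort leq s).
  apply/allP => x; rewrite (perm_mem Hpe) => Hx; rewrite lt0n; apply/negP => /eqP Hx0.
  by move: H0; rewrite -Hx0 Hx.
have := sorted_sum _ 0 Hso Hall. move=> H. by rewrite muln0 add0n add1n in H.
Qed.

Lemma count_mem_le (T : eqType) (f : nat -> T) (m : nat) (s : seq nat) (S : seq T) :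
  (forall v, count (fun b => f b == v) s <= m) ->
  count (fun b => f b \in S) s <= size S * m.
Proof.
move=> Hv; elim: S => [|v S IH] /=.
  by rewrite (eq_count (a2 := pred0)) ?count_pred0.
rewrite (eq_count (a2 := predU (fun b => f b == v) (fun b => f b \in S))); last first.
  by move=> b; rewrite /= in_cons.
have := count_predUI (fun b => f b == v) (fun b => f b \in S) s.
have := Hv v. lia.
Qed.

Lemma pigeon (T : eqType) (S : seq T) (f : nat -> T) :
  size S <= 36 -> (forall b, b < 2590 -> f b \in S) ->
  exists v, 72 <= count (fun b => f b == v) (iota 0 2590).
Proof.
move=> HS Hf; apply: NNPP => H.
have Hv : forall v, count (fun b => f b == v) (iota 0 2590) <= 71.
  move=> v; rewrite leqNgt; apply/negP => Hc; apply: H; exists v; exact: Hc.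
have := @count_mem_le _ f 71 _ S Hv.
rewrite (@eq_in_count _ _ predT); last by move=> b; rewrite mem_iota => /andP[_ Hb]; exact: Hf.
rewrite count_predT size_iota. lia.
Qed.

Lemma sumn_iotaS (g : nat -> nat) k :
  sumn [seq g i | i <- iota 0 k.+1] = sumn [seq g i | i <- iota 0 k] + g k.
Proof. by rewrite -addn1 iotaD map_cat sumn_cat /= addn0. Qed.

Lemma comb (T : eqType) (S : seq T) (f : nat -> T) :
  size S <= 36 -> (forall b, b < 2590 -> f b \in S) ->
  exists a1 a2 e, a1 < a2 /\ 0 < e /\ a2 + e < 2590 /\
     f a1 = f (a1 + e) /\ f a2 = f (a2 + e) /\ f a1 = f a2.
Proof.
move=> HS Hf; have [v Hv] := @pigeon _ _ _ HS Hf.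
set B := filter (fun b => f b == v) (iota 0 2590).
have HB : 72 <= size B by rewrite size_filter.
have Hsort : sorted ltn B := sorted_filter ltn_trans _ (iota_ltn_sorted 0 2590).
have HmB : forall x, x \in B -> x < 2590 /\ f x = v.
  by move=> x; rewrite mem_filter mem_iota => /andP[/eqP ? /andP[_ ?]].
clearbody B.
pose a i := nth 0 B i.
have Ha : forall i, i < 72 -> a i < 2590 /\ f (a i) = v.
  by move=> i Hi; apply: HmB; apply: mem_nth; apply: leq_trans HB.
have Hinc : forall i j, i < j -> j < 72 -> a i < a j.
  move=> i j Hij Hj; apply: (sorted_ltn_nth ltn_trans 0 Hsort) => //; rewrite inE; lia.
have T1 : forall k, k < 72 -> sumn [seq a i.+1 - a i | i <- iota 0 k] + a 0 = a k.
  elim=> [|k IH] Hk //; rewrite sumn_iotaS.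
  have := IH ltac:(lia); have := Hinc k k.+1 ltac:(lia) ltac:(lia); lia.
have T2 : forall k, k < 71 -> sumn [seq a i.+2 - a i | i <- iota 0 k] + a 0 + a 1 = a k + a k.+1.
  elim=> [|k IH] Hk //; rewrite sumn_iotaS.
  have := IH ltac:(lia); have := Hinc k k.+2 ltac:(lia) ltac:(lia);
  have := Hinc k.+1 k.+2 ltac:(lia) ltac:(lia); have := Hinc k k.+1 ltac:(lia) ltac:(lia). lia.
pose P := [seq (i, i.+1) | i <- iota 0 71] ++ [seq (i, i.+2) | i <- iota 0 70].
pose F (pr : nat * nat) := a pr.2 - a pr.1.
have HP : forall x, x \in P -> exists i j, [/\ x = (i, j), i < j, j <= i.+2 & j < 72].
  move=> x; rewrite mem_cat => /orP[] /mapP[i]; rewrite mem_iota => /andP[_ Hi] ->;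
  exists i; [exists i.+1 | exists i.+2]; split => //; lia.
have Hsz : size [seq F x | x <- P] = 141 by rewrite size_map size_cat !size_map !size_iota.
have Hsum : sumn [seq F x | x <- P] <= 3 * 2589.
  have E1 : [seq F x | x <- [seq (i, i.+1) | i <- iota 0 71]] = [seq a i.+1 - a i | i <- iota 0 71].
    by rewrite -map_comp.
  have E2 : [seq F x | x <- [seq (i, i.+2) | i <- iota 0 70]] = [seq a i.+2 - a i | i <- iota 0 70].
    by rewrite -map_comp.
  rewrite map_cat sumn_cat E1 E2.
  have := T1 71 isT; have := T2 70 isT; have := Ha 71 isT; have := Ha 70 isT.
  have := Hinc 0 1 isT isT. lia.
have HuP : uniq P by vm_compute.
apply: NNPP => Hgoal.
have Hnot : ~~ uniq [seq F x | x <- P].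
  apply/negP => Hu; have := uniq_sum _ Hu.
  have -> : 0 \notin [seq F x | x <- P].
    apply/negP => /mapP[x /HP [i [j [-> Hij _ Hj]]]]; rewrite /F /=.
    have Ai := Hinc i j Hij Hj; move=> Bi; clear -Ai Bi; lia.
  rewrite Hsz; move=> /(_ isT) A; clear -A Hsum; lia.
have key : forall i1 j1 i2 j2, i1 < i2 -> i1 < j1 -> j1 < 72 -> i2 < j2 -> j2 < 72 ->
    a j1 - a i1 = a j2 - a i2 -> False.
  move=> i1 j1 i2 j2 H12 Hij1 Hj1 Hij2 Hj2 HF; apply: Hgoal.
  have Hi1 := Hinc i1 j1 Hij1 Hj1; have Hi2 := Hinc i2 j2 Hij2 Hj2.
  have H12' := Hinc i1 i2 H12 (ltn_trans Hij2 Hj2).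
  exists (a i1), (a i2), (a j1 - a i1); split; [|split; [|split; [|split; [|split]]]].
  - exact: H12'.
  - clear -Hi1; lia.
  - have H0 := (Ha j2 Hj2).1; clear -H0 HF Hi1 Hi2; lia.
  - rewrite subnKC ?(ltnW Hi1) //; rewrite (Ha i1 _).2 ?(Ha j1 _).2 //; clear -H12 Hij1 Hj1 Hij2 Hj2; lia.
  - rewrite HF subnKC ?(ltnW Hi2) //; rewrite (Ha i2 _).2 ?(Ha j2 _).2 //; clear -H12 Hij1 Hj1 Hij2 Hj2; lia.
  - rewrite (Ha i1 _).2 ?(Ha i2 _).2 //; clear -H12 Hij1 Hj1 Hij2 Hj2; lia.
move: Hnot; rewrite map_inj_in_uniq ?HuP //.
move=> x y Hx Hy HFxy; apply: NNPP => Hxy.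
have [i1 [j1 [Ex Hij1 Hj1i Hj1]]] := HP x Hx.
have [i2 [j2 [Ey Hij2 Hj2i Hj2]]] := HP y Hy.
move: HFxy; rewrite Ex Ey /F /= => HF.
case: (ltngtP i1 i2) => H12.
- exact: (key i1 j1 i2 j2).
- exact: (key i2 j2 i1 j1).
- subst i2; apply: Hxy; rewrite Ex Ey.
  case: (ltngtP j1 j2) => Hj12.
  + have Ai := Hinc j1 j2 Hj12 Hj2; have Bi := Hinc i1 j1 Hij1 Hj1; clear -Ai Bi HF; lia.
  + have Ai := Hinc j2 j1 Hj12 Hj1; have Bi := Hinc i1 j2 Hij2 Hj2; clear -Ai Bi HF; lia.
  + by rewrite Hj12.
Qed.

Theorem theorem2p3 :
  forall col : nat -> nat -> 'I_3, has_mono_L 2593 3 col.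
Proof.
move=> col; apply: NNPP => HnL.
have NL : forall i j t i' j', 0 < t -> 0 < i -> 0 < j -> i' = i + t -> j' = j + t ->
     i' <= 2593 -> j' <= 2593 -> col i j = col i j' -> col i j' = col i' j' -> False.
  move=> i j t i' j' Ht Hi Hj -> -> Hi' Hj' E1 E2; apply: HnL; exists i, j, t.
  rewrite /in_grid; split; first exact: Ht.
  split; first (split; apply/andP; split; lia).
  split; first (split; apply/andP; split; lia).
  split; first (split; apply/andP; split; lia).
  by split.
have Hmem : forall b, b < 2590 -> typ col b \in SS.
  move=> b Hb; case E: (typ col b) => [[p q] [c1 c2]].
  have [_ _ _ _ Hne] := window col b NL ltac:(lia) _ _ _ _ E.
  have Hin : (typ col b).1 \in PQ by apply: pqsel_in.
  rewrite E /= in Hin.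
  rewrite /SS; apply/allpairsP; exists ((p, q), (c1, c2)) => /=; split => //.
  exact: CC_in.
have [a1 [a2 [e [H12 [He [Hae [E1 [E2 E3]]]]]]]] := @comb _ _ _ size_SS Hmem.
case Et: (typ col a1) => [[p q] [c1 c2]].
have Et1 : typ col (a1 + e) = ((p, q), (c1, c2)) by rewrite -E1.
have Et2 : typ col a2 = ((p, q), (c1, c2)) by rewrite -E3.
have Et3 : typ col (a2 + e) = ((p, q), (c1, c2)) by rewrite -E2 -E3.
have [Hpq A0p A0q A0F Hne] := window col a1 NL ltac:(lia) _ _ _ _ Et.
have [_ A1p A1q A1F _] := window col (a1 + e) NL ltac:(lia) _ _ _ _ Et1.
have [_ A2p A2q A2F _] := window col a2 NL ltac:(lia) _ _ _ _ Et2.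
have [_ A3p A3q A3F _] := window col (a2 + e) NL ltac:(lia) _ _ _ _ Et3.
set Z1 := col (1 + q - p + e) (a1 + e + 1 + q).
set Z2 := col (1 + q - p + e) (a2 + e + 1 + q).
set W := col (1 + q - p + e + (a2 - a1)) (a2 + e + 1 + q).
have Z1c1 : Z1 != c1.
  apply/eqP => Ez; apply: (NL 1 (a1 + 1 + p) (e + q - p) (1 + q - p + e) (a1 + e + 1 + q) _ _ _ _ _ _ _ (etrans A0p (esym A1q)) (etrans A1q (esym Ez))); clear -Hpq H12 He Hae; lia.
have Z1c2 : Z1 != c2.
  apply/eqP => Ez; apply: (NL (1 + q - p) (a1 + 1 + q) e (1 + q - p + e) (a1 + e + 1 + q) _ _ _ _ _ _ _ (etrans A0F (esym A1F)) (etrans A1F (esym Ez))); clear -Hpq H12 He Hae; lia.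
have Z2c1 : Z2 != c1.
  apply/eqP => Ez; apply: (NL 1 (a2 + 1 + p) (e + q - p) (1 + q - p + e) (a2 + e + 1 + q) _ _ _ _ _ _ _ (etrans A2p (esym A3q)) (etrans A3q (esym Ez))); clear -Hpq H12 He Hae; lia.
have Z2c2 : Z2 != c2.
  apply/eqP => Ez; apply: (NL (1 + q - p) (a2 + 1 + q) e (1 + q - p + e) (a2 + e + 1 + q) _ _ _ _ _ _ _ (etrans A2F (esym A3F)) (etrans A3F (esym Ez))); clear -Hpq H12 He Hae; lia.
have EZ : Z2 = Z1 by apply: (three_col c1 c2 Z1 Z2) => //; rewrite eq_sym.
have Wc1 : W != c1.
  apply/eqP => Ew; apply: (NL 1 (a1 + 1 + p) (a2 - a1 + e + q - p) (1 + q - p + e + (a2 - a1)) (a2 + e + 1 + q) _ _ _ _ _ _ _ (etrans A0p (esym A3q)) (etrans A3q (esym Ew))); clear -Hpq H12 He Hae; lia.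
have Wc2 : W != c2.
  apply/eqP => Ew; apply: (NL (1 + q - p) (a1 + 1 + q) (a2 - a1 + e) (1 + q - p + e + (a2 - a1)) (a2 + e + 1 + q) _ _ _ _ _ _ _ (etrans A0F (esym A3F)) (etrans A3F (esym Ew))); clear -Hpq H12 He Hae; lia.
have EW : W = Z1 by apply: (three_col c1 c2 Z1 W) => //; rewrite eq_sym.
apply: (NL (1 + q - p + e) (a1 + e + 1 + q) (a2 - a1) (1 + q - p + e + (a2 - a1)) (a2 + e + 1 + q) _ _ _ _ _ _ _ (esym EZ) (etrans EZ (esym EW))); clear -Hpq H12 He Hae; lia.
Qed.
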